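(* Let $G$ and $H$ be undirected graphs with nonnegative edge weights on the same vertex set of $n$ vertices, with adjacency matrices $A_G,A_H$, degree matrices $D_G,D_H$, and Laplacian matrices $L_G=D_G-A_G$ and $L_H=D_H-A_H$. Then \[ \|A_G-A_H\|\leq\sqrt{n}\,\|L_G-L_H\|, \] where $\|\cdot\|$ denotes the spectral (2-)norm.
   Context: For a graph $G$ on vertices $v_1,\dots,v_n$ with edge weights $w_{ij}\geq0$ (and $w_{ij}=0$ for non-edges), $(A_G)_{ij}=w_{ij}$ for $i\neq j$, $(A_G)_{ii}=0$, and $D_G$ is diagonal with $(D_G)_{ii}=\sum_j w_{ij}$. *)

(* Defs.v *)
From HB Require Import structures.
From mathcomp Require Import all_boot all_order all_algebra.
From mathcomp Require Import boolp classical_sets reals.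
Set Implicit Arguments. Unset Strict Implicit. Unset Printing Implicit Defensive.
Import Order.TTheory GRing.Theory Num.Theory.
Local Open Scope ring_scope.
Local Open Scope classical_set_scope.

(* A weighted undirected graph on vertices 'I_n is given by its weight
   matrix W : 'M[R]_n (W i j = w_ij, 0 for non-edges). *)
Definition weight_graph (R : realType) (n : nat) (W : 'M[R]_n) : Prop :=
  (forall i j, W i j = W j i) /\ (forall i j, 0 <= W i j) /\ (forall i, W i i = 0).

Definition adjacency (R : realType) (n : nat) (W : 'M[R]_n) : 'M[R]_n :=
  \matrix_(i, j) (if i == j then 0 else W i j).

Definition degree_mx (R : realType) (n : nat) (W : 'M[R]_n) : 'M[R]_n :=
  diag_mx (\row_i (\sum_j W i j)).

Definition laplacian (R : realType) (n : nat) (W : 'M[R]_n) : 'M[R]_n :=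
  degree_mx W - adjacency W.

Definition enorm (R : realType) (n : nat) (x : 'cV[R]_n) : R :=
  Num.sqrt (\sum_i (x i 0) ^+ 2).

Definition spectral_norm (R : realType) (n : nat) (M : 'M[R]_n) : R :=
  sup [set enorm (M *m x) | x in [set x : 'cV[R]_n | enorm x <= 1]].

(* Main.v *)
Require Import Defs.
From HB Require Import structures.
From mathcomp Require Import all_boot all_order all_algebra.
From mathcomp Require Import boolp classical_sets reals.
From mathcomp Require Import ring.
Import Order.TTheory GRing.Theory Num.Theory.
Set Implicit Arguments. Unset Strict Implicit.
Local Open Scope ring_scope.

Section H.
Variable R : realType.
Variable n : nat.
Local Open Scope classical_set_scope.

Lemma CS (a x : 'I_n -> R) :
  (\sum_j a j * x j) ^+ 2 <= (\sum_j a j ^+ 2) * (\sum_j x j ^+ 2).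
Proof.
have H0 : 0 <= \sum_j \sum_k (a j * x k - a k * x j) ^+ 2.
  by apply: sumr_ge0 => j _; apply: sumr_ge0 => k _; apply: sqr_ge0.
set P := \sum_j \sum_k a j ^+ 2 * x k ^+ 2.
set Q := \sum_j \sum_k (a j * x j) * (a k * x k).
have EP : (\sum_j a j ^+ 2) * (\sum_j x j ^+ 2) = P.
  by rewrite mulr_suml; apply: eq_bigr => j _; rewrite mulr_sumr.
have EQ : (\sum_j a j * x j) ^+ 2 = Q.
  by rewrite expr2 mulr_suml; apply: eq_bigr => j _; rewrite mulr_sumr.
have EP' : \sum_j \sum_k a k ^+ 2 * x j ^+ 2 = P.
  by rewrite /P exchange_big.
have E : \sum_j \sum_k (a j * x k - a k * x j) ^+ 2 =
   P + P - Q *+ 2.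
  rewrite -{2}EP' -big_split /= /Q -sumrMnl -sumrB; apply: eq_bigr => j _.
  rewrite -big_split /= -sumrMnl -sumrB; apply: eq_bigr => k _.
  ring.
rewrite EP EQ -subr_ge0.
have : 0 <= P + P - Q *+ 2 by rewrite -E.
move=> h.
have -> : P - Q = (P + P - Q *+ 2) / 2 by field.
by apply: divr_ge0.
Qed.

Definition fro2 (M : 'M[R]_n) := \sum_i \sum_j M i j ^+ 2.

Lemma fro2_ge0 (M : 'M[R]_n) : 0 <= fro2 M.
Proof. by apply: sumr_ge0 => i _; apply: sumr_ge0 => j _; apply: sqr_ge0. Qed.

Lemma enorm_sq (x : 'cV[R]_n) : enorm x ^+ 2 = \sum_i x i 0 ^+ 2.
Proof. by rewrite /enorm sqr_sqrtr //; apply: sumr_ge0 => i _; apply: sqr_ge0. Qed.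

Lemma enorm_ge0 (x : 'cV[R]_n) : 0 <= enorm x.
Proof. exact: sqrtr_ge0. Qed.

Lemma enorm0 : enorm (0 : 'cV[R]_n) = 0.
Proof.
rewrite /enorm (eq_bigr (fun _ => 0)) ?big1_eq ?sqrtr0 // => i _.
by rewrite mxE expr0n.
Qed.

Lemma mul_bound (M : 'M[R]_n) (x : 'cV[R]_n) : enorm x <= 1 -> enorm (M *m x) <= Num.sqrt (fro2 M).
Proof.
move=> hx.
have hx2 : \sum_i x i 0 ^+ 2 <= 1.
  by rewrite -enorm_sq expr_le1 // enorm_ge0.
rewrite /enorm ler_sqrt ?fro2_ge0 //.
apply: ler_sum => i _; rewrite mxE.
apply: le_trans (CS (fun j => M i j) (fun j => x j 0)) _.
rewrite -[X in _ <= X]mulr1; apply: ler_wpM2l => //.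
by apply: sumr_ge0 => j _; apply: sqr_ge0.
Qed.

Let S (M : 'M[R]_n) := [set enorm (M *m x) | x in [set x : 'cV[R]_n | enorm x <= 1]].

Lemma S_has_sup (M : 'M[R]_n) : has_sup (S M).
Proof.
split.
  exists (enorm (M *m 0)); exists 0 => //=.
  by rewrite enorm0.
exists (Num.sqrt (fro2 M)) => y [x hx <-]; exact: mul_bound.
Qed.

Lemma spec_le_fro (M : 'M[R]_n) : spectral_norm M <= Num.sqrt (fro2 M).
Proof.
apply: ge_sup; first by case: (S_has_sup M).
move=> y [x hx <-]; exact: mul_bound.
Qed.

Lemma spec_ge0 (M : 'M[R]_n) : 0 <= spectral_norm M.
Proof.
apply: (sup_upper_bound (S_has_sup M)).
exists 0; first by rewrite /= enorm0.
by rewrite mulmx0 enorm0.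
Qed.

Lemma enorm_delta (j : 'I_n) : enorm (delta_mx j 0 : 'cV[R]_n) = 1.
Proof.
rewrite /enorm (bigD1 j) //= big1 ?addr0 ?mxE ?eqxx ?expr1n ?sqrtr1 //.
by move=> i hij; rewrite mxE (negbTE hij) /= expr0n.
Qed.

Lemma fro_le_spec (M : 'M[R]_n) : fro2 M <= n%:R * spectral_norm M ^+ 2.
Proof.
rewrite /fro2 exchange_big /=.
have -> : n%:R * spectral_norm M ^+ 2 = \sum_(j < n) spectral_norm M ^+ 2.
  by rewrite sumr_const card_ord mulr_natl.
apply: ler_sum => j _.
have -> : \sum_i M i j ^+ 2 = enorm (M *m delta_mx j 0) ^+ 2.
  by rewrite enorm_sq -colE; apply: eq_bigr => i _; rewrite mxE.
rewrite ler_pXn2r // ?nnegrE ?enorm_ge0 ?spec_ge0 //.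
apply: (sup_upper_bound (S_has_sup M)).
by exists (delta_mx j 0) => //=; rewrite enorm_delta.
Qed.
End H.

Theorem lemma2 (R : realType) (n : nat) (WG WH : 'M[R]_n) :
  weight_graph WG -> weight_graph WH ->
  spectral_norm (adjacency WG - adjacency WH)
    <= Num.sqrt (n%:R) * spectral_norm (laplacian WG - laplacian WH).
Proof.
move=> _ _.
set A := adjacency WG - adjacency WH.
set M := laplacian WG - laplacian WH.


apply: le_trans (spec_le_fro A) _.
have h1 : fro2 A <= fro2 M.
  apply: ler_sum => i _; apply: ler_sum => j _.
  rewrite /A /M /laplacian /degree_mx !mxE.
  case: eqVneq => [->|hij] /=.
    by rewrite subr0 expr0n /= sqr_ge0.
  rewrite !mulr0n !sub0r -opprD sqrrN; apply: lexx.
have h2 : Num.sqrt (fro2 A) <= Num.sqrt (fro2 M) by rewrite ler_sqrt ?fro2_ge0.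
apply: le_trans h2 _.
rewrite -(ger0_norm (spec_ge0 M)) -sqrtr_sqr -sqrtrM ?ler0n //.
by rewrite ler_sqrt ?fro_le_spec // mulr_ge0 ?ler0n ?sqr_ge0.
Qed.
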